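(* Let $R$ be a nontrivial tangible supersemifield, let $(q,b)$ be a quadratic pair on an $R$-module $V$, and let $x,y\in V$. (a) If $R$ is dense, then $q$ is quasilinear on $Rx+Ry$ if and only if $b(x,y)^2\le_\nu q(x)q(y)$. If this inequality fails, then $q$ is rigid at $(x,y)$. (b) If $R$ is discrete (with $\pi$ as in the context), then $q$ is quasilinear on $Rx+Ry$ if either $b(x,y)^2<_\nu \pi^{-1}q(x)q(y)$, or both $q(x),q(y)$ lie in $eR$ and $b(x,y)^2\cong_\nu \pi^{-1}q(x)q(y)$. If neither of these two conditions holds, then $q$ is $\nu$-rigid at $(x,y)$. If moreover $b(x,y)^2>_\nu \pi^{-1}q(x)q(y)$, then $q$ is rigid at $(x,y)$.
   Context: All semirings are commutative with $1$. A semiring $R$ is supertropical if $e:=1+1$ satisfies $e+e=e$ and, for all $x,y\in R$: if $ex\neq ey$ then $x+y\in\{x,y\}$, and if $ex=ey$ then $x+y=ey$. The ideal $eR$ is totally ordered by $u\le v\iff u+v=v$. For $x,y\in R$ write $x\le_\nu y$, $x\cong_\nu y$, $x<_\nu y$ for $ex\le ey$, $ex=ey$, $ex<ey$ respectively. Put $\mathcal T=R\setminus eR$ and $\mathcal G=eR\setminus\{0\}$. A tangible supersemifield is a supertropical semiring in which $\mathcal T$ is a group under multiplication, $\mathcal G$ is a group under multiplication (with identity $e$), and $e\mathcal T=\mathcal G$; it is nontrivial if $\mathcal G\neq\{e\}$. It is called discrete if $\mathcal G$ has a smallest element $c_0$ with $c_0>e$; then $\pi\in\mathcal T$ denotes an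 element with $e\pi^{-1}=c_0$. Otherwise it is called dense. A quadratic form on an $R$-module $V$ is a map $q:V\to R$ with $q(ax)=a^2q(x)$ for $a\in R,x\in V$, such that there is a symmetric bilinear form $b:V\times V\to R$ with $q(x+y)=q(x)+q(y)+b(x,y)$ for all $x,y\in V$; every such $b$ is a companion of $q$, and $(q,b)$ is a quadratic pair. $q$ is quasilinear on a submodule $W$ if $q(u+v)=q(u)+q(v)$ for all $u,v\in W$. $q$ is rigid at $(x,y)$ if $b_1(x,y)=b_2(x,y)$ for any two companions $b_1,b_2$ of $q$, and $\nu$-rigid at $(x,y)$ if $eb_1(x,y)=eb_2(x,y)$ for any two companions $b_1,b_2$. *)

(* Defs.v *)
From HB Require Import structures.
From mathcomp Require Import all_boot all_order all_algebra.
Set Implicit Arguments. Unset Strict Implicit. Unset Printing Implicit Defensive.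
Import GRing.Theory.
Local Open Scope ring_scope.

Section Supertropical.
Variable R : comPzSemiRingType.

Definition sr_e : R := 1 + 1.

Definition in_eR (z : R) : Prop := exists w : R, z = sr_e * w.
Definition tangible (z : R) : Prop := ~ in_eR z.
Definition ghostnz (z : R) : Prop := in_eR z /\ z <> 0.

Definition eR_le (u v : R) : Prop := u + v = v.
Definition eR_lt (u v : R) : Prop := eR_le u v /\ u <> v.

Definition nu_le (x y : R) : Prop := eR_le (sr_e * x) (sr_e * y).
Definition nu_eq (x y : R) : Prop := sr_e * x = sr_e * y.
Definition nu_lt (x y : R) : Prop := eR_lt (sr_e * x) (sr_e * y).

Definition supertropical : Prop :=
  sr_e + sr_e = sr_e /\
  (forall x y : R, sr_e * x <> sr_e * y -> x + y = x \/ x + y = y) /\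
  (forall x y : R, sr_e * x = sr_e * y -> x + y = sr_e * y).

(* tangible supersemifield: T is a multiplicative group (identity 1),
   G is a multiplicative group (identity e), and e T = G. *)
Definition tangible_supersemifield : Prop :=
  supertropical /\
  (tangible 1 /\ (forall s t, tangible s -> tangible t -> tangible (s * t)) /\
   (forall t, tangible t -> exists u, tangible u /\ t * u = 1)) /\
  (ghostnz sr_e /\ (forall g h, ghostnz g -> ghostnz h -> ghostnz (g * h)) /\
   (forall g, ghostnz g -> exists h, ghostnz h /\ g * h = sr_e)) /\
  (forall t, tangible t -> ghostnz (sr_e * t)) /\
  (forall g, ghostnz g -> exists t, tangible t /\ g = sr_e * t).

Definition sr_nontrivial : Prop := exists g, ghostnz g /\ g <> sr_e.

Definition discrete_gen (c0 : R) : Prop :=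
  ghostnz c0 /\ eR_lt sr_e c0 /\
  (forall g, ghostnz g -> eR_lt sr_e g -> eR_le c0 g).

Definition sr_discrete : Prop := exists c0, discrete_gen c0.
Definition sr_dense : Prop := ~ sr_discrete.

End Supertropical.

Section Quadratic.
Variables (R : comPzSemiRingType) (V : lSemiModType R).

Definition sym_bilinear (b : V -> V -> R) : Prop :=
  (forall u v, b u v = b v u) /\
  (forall u v w, b (u + v) w = b u w + b v w) /\
  (forall (a : R) u w, b (a *: u) w = a * b u w).

Definition companion (q : V -> R) (b : V -> V -> R) : Prop :=
  sym_bilinear b /\ (forall u v, q (u + v) = q u + q v + b u v).

Definition quadratic_pair (q : V -> R) (b : V -> V -> R) : Prop :=
  (forall (a : R) u, q (a *: u) = a ^+ 2 * q u) /\ companion q b.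

Definition span2 (x y : V) (u : V) : Prop :=
  exists a c : R, u = a *: x + c *: y.

Definition quasilinear_on (q : V -> R) (W : V -> Prop) : Prop :=
  forall u v, W u -> W v -> q (u + v) = q u + q v.

Definition rigid_at (q : V -> R) (x y : V) : Prop :=
  forall b1 b2, companion q b1 -> companion q b2 -> b1 x y = b2 x y.

Definition nu_rigid_at (q : V -> R) (x y : V) : Prop :=
  forall b1 b2, companion q b1 -> companion q b2 ->
    sr_e R * b1 x y = sr_e R * b2 x y.

End Quadratic.

(* Main.v *)
Require Import Defs.
From HB Require Import structures.
From mathcomp Require Import all_boot all_order all_algebra ring.
From Stdlib Require Import Classical.
Set Implicit Arguments. Unset Strict Implicit.
Import GRing.Theory.
Local Open Scope ring_scope.

Section ST.
Variable R : comPzSemiRingType.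
Local Notation e := (sr_e R).
Implicit Types (g h u v w x y z t s k r T : R).
Local Notation le := (@eR_le R).
Local Notation lt := (@eR_lt R).
Definition gh (u : R) := e * u = u.
Definition absorb (w z : R) := z + w = z.

Hypothesis ST : supertropical R.

Lemma ee : e * e = e.
Proof. by rewrite {1}/sr_e mulrDl mul1r; case: ST. Qed.
Lemma eeK x : e * (e * x) = e * x.
Proof. by rewrite mulrA ee. Qed.
Lemma gh_e x : gh (e * x).
Proof. exact: eeK. Qed.
Lemma eadd x : x + x = e * x.
Proof. by rewrite /sr_e mulrDl mul1r. Qed.
Lemma nuM x y : e * x * (e * y) = e * (x * y).
Proof. by rewrite mulrACA ee. Qed.
Lemma gh_mulr u v : gh u -> gh (u * v).
Proof. by rewrite /gh mulrA => ->. Qed.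
Lemma gh_mull u v : gh u -> gh (v * u).
Proof. by rewrite mulrC; apply: gh_mulr. Qed.
Lemma gh_add u v : gh u -> gh v -> gh (u + v).
Proof. by rewrite /gh mulrDr => -> ->. Qed.
Lemma gh0 : gh 0.
Proof. by rewrite /gh mulr0. Qed.
Lemma in_eR_gh u : in_eR u <-> gh u.
Proof. split; first by case=> w ->; apply: gh_e. by move=> h; exists u. Qed.

Lemma le_refl u : gh u -> le u u.
Proof. by rewrite /eR_le eadd. Qed.
Lemma le_trans u v w : le u v -> le v w -> le u w.
Proof. by rewrite /eR_le => h1 h2; rewrite -h2 addrA h1. Qed.
Lemma le_anti u v : le u v -> le v u -> u = v.
Proof. by rewrite /eR_le => h1 h2; rewrite -h1 addrC h2. Qed.
Lemma le_total u v : gh u -> gh v -> le u v \/ le v u.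
Proof.
move=> hu hv; case: (eqVneq u v) => [->|nuv]; first by left; apply: le_refl.
case: ST => _ [h2 _]; case: (h2 u v); first by rewrite hu hv; apply/eqP.
  by move=> h; right; rewrite /eR_le addrC.
by move=> h; left.
Qed.
Lemma le_mul u v w : le u v -> le (w * u) (w * v).
Proof. by rewrite /eR_le -mulrDr => ->. Qed.
Lemma le0 u : le 0 u.
Proof. by rewrite /eR_le add0r. Qed.
Lemma lt_le u v : lt u v -> le u v.
Proof. by case. Qed.
Lemma lt_nle u v : lt u v -> le v u -> False.
Proof. by case=> h1 h2 h3; apply: h2; apply: le_anti. Qed.
Lemma lt_le_trans u v w : lt u v -> le v w -> lt u w.
Proof.
case=> h1 h2 h3; split; first exact: le_trans h3.
by move=> E; subst w; apply: h2; apply: le_anti.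
Qed.
Lemma le_lt_trans u v w : le u v -> lt v w -> lt u w.
Proof.
move=> h1 [h2 h3]; split; first exact: le_trans h2.
by move=> E; subst w; apply: h3; apply: le_anti.
Qed.
Lemma lt_irr u : lt u u -> False.
Proof. by case. Qed.
Lemma lt_ne0 u v : lt u v -> v <> 0.
Proof. by move=> [h1 h2] E; subst v; apply: h2; move: h1; rewrite /eR_le addr0. Qed.
Lemma le_addl u v : gh u -> le u (u + v).
Proof. by move=> hu; rewrite /eR_le addrA eadd hu. Qed.
Lemma le_addr u v : gh v -> le v (u + v).
Proof. by move=> hv; rewrite addrC; apply: le_addl. Qed.
Lemma le_max u v : le u v -> u + v = v.
Proof. by []. Qed.
Lemma le_max' u v : le v u -> u + v = u.
Proof. by rewrite addrC. Qed.
Lemma lt_add u v w : gh u -> gh v -> lt u w -> lt v w -> lt (u + v) w.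
Proof.
move=> hu hv h1 h2; case: (le_total hu hv) => h.
  by rewrite le_max.
by rewrite le_max'.
Qed.

Lemma dom w z : lt (e * w) (e * z) -> z + w = z.
Proof.
move=> [h1 h2]; case: ST => _ [h _].
case: (h w z) => // E.
  exfalso; apply: h2; have := congr1 (fun t => e * t) E.
  by rewrite /= mulrDr h1 => ->.
by rewrite addrC.
Qed.
Lemma domeq w z : e * w = e * z -> w + z = e * z.
Proof. by case: ST => _ [_ h]; apply: h. Qed.
Lemma absorb_gh w z : gh z -> le (e * w) (e * z) -> absorb w z.
Proof.
move=> hz h; case: (eqVneq (e * w) (e * z)) => E.
  by rewrite /absorb addrC domeq // hz.
by rewrite /absorb dom //; split => //; apply/eqP.
Qed.
Lemma absorb_ext w z r : absorb w z -> absorb w (z + r).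
Proof. by rewrite /absorb => h; rewrite addrAC h. Qed.
Lemma absorb_trans w z T : absorb w z -> absorb z T -> absorb w T.
Proof. by rewrite /absorb => h1 h2; rewrite -{1}h2 -addrA h1 h2. Qed.
Lemma absorb_add w1 w2 T : absorb w1 T -> absorb w2 T -> absorb (w1 + w2) T.
Proof. by rewrite /absorb => h1 h2; rewrite addrA h1 h2. Qed.
Lemma absorb_mul w z k : absorb w z -> absorb (k * w) (k * z).
Proof. by rewrite /absorb -mulrDr => ->. Qed.
Lemma absorb0 z : absorb 0 z.
Proof. by rewrite /absorb addr0. Qed.

Hypothesis TS : tangible_supersemifield R.

Lemma gnzP g : ghostnz g <-> gh g /\ g <> 0.
Proof. by rewrite /ghostnz in_eR_gh. Qed.
Lemma gnz_gh g : ghostnz g -> gh g.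
Proof. by case/gnzP. Qed.
Lemma gnz_ne0 g : ghostnz g -> g <> 0.
Proof. by case/gnzP. Qed.
Lemma gnz_inv g : ghostnz g -> exists h, ghostnz h /\ g * h = e.
Proof. by case: TS => _ [_ [[_ [_ h]] _]]; apply: h. Qed.
Lemma gnz_mul g h : ghostnz g -> ghostnz h -> ghostnz (g * h).
Proof. by case: TS => _ [_ [[_ [hh _]] _]]; apply: hh. Qed.
Lemma gnz_e : ghostnz e.
Proof. by case: TS => _ [_ [[hh _] _]]. Qed.
Lemma tang_nu t : tangible t -> ghostnz (e * t).
Proof. by case: TS => _ [_ [_ [hh _]]]; apply: hh. Qed.
Lemma gnz_lift g : ghostnz g -> exists t, tangible t /\ g = e * t.
Proof. by case: TS => _ [_ [_ [_ hh]]]; apply: hh. Qed.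
Lemma tang_inv t : tangible t -> exists u, t * u = 1.
Proof. by case: TS => _ [[_ [_ hh]] _] /hh [u [_ h]]; exists u. Qed.
Lemma tang_mul s t : tangible s -> tangible t -> tangible (s * t).
Proof. by case: TS => _ [[_ [hh _]] _]; apply: hh. Qed.
Lemma nz_nu x : x <> 0 -> ghostnz (e * x).
Proof.
move=> hx; case: (classic (in_eR x)) => h; last exact: tang_nu.
by move/in_eR_gh: h => h; rewrite h; apply/gnzP.
Qed.
Lemma nu0 x : e * x = 0 -> x = 0.
Proof. by move=> h; apply: NNPP => /nz_nu /gnz_ne0. Qed.
Lemma gh_cancel g u v : ghostnz g -> gh u -> gh v -> g * u = g * v -> u = v.
Proof.
move=> /gnz_inv [h [_ gh1]] hu hv E.
by rewrite -hu -hv -gh1 mulrAC [in RHS]mulrAC E.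
Qed.
Lemma lt_mul g u v : ghostnz g -> gh u -> gh v -> lt u v -> lt (g * u) (g * v).
Proof.
move=> hg hu hv [h1 h2]; split; first exact: le_mul.
by move=> E; apply: h2; apply: (gh_cancel hg).
Qed.
Lemma lt_gnz u v : gh v -> lt u v -> ghostnz v.
Proof. by move=> hv h; apply/gnzP; split => //; apply: lt_ne0 h. Qed.
Lemma gnz_mul_ne0 g h : ghostnz g -> ghostnz h -> g * h <> 0.
Proof. by move=> h1 h2; apply/gnz_ne0/gnz_mul. Qed.
Lemma gh_gnz g : ghostnz g -> e * g = g.
Proof. by move/gnz_gh. Qed.
Lemma nuM_gh u v : gh u -> e * (u * v) = u * v.
Proof. by move=> hu; apply: gh_mulr. Qed.

Lemma nu2 a : e * a ^+ 2 = (e * a) * (e * a).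
Proof. by rewrite nuM expr2. Qed.
Lemma nuee a a' : e * (e * a * a') = (e * a) * (e * a').
Proof. by rewrite nuM -mulrA eeK. Qed.

Lemma AM1 a a' : le (e * a) (e * a') -> absorb (e * a * a') (a ^+ 2 + a' ^+ 2).
Proof.
move=> h; case: (eqVneq (e * a) (e * a')) => E.
  have E2 : e * a ^+ 2 = e * a' ^+ 2 by rewrite !nu2 E.
  rewrite domeq //; apply: absorb_gh; first exact: gh_e.
  by rewrite eeK nuee E -nu2; apply: le_refl; apply: gh_e.
have hlt : lt (e * a) (e * a') by split => //; apply/eqP.
have hg' : ghostnz (e * a') by apply: lt_gnz hlt; apply: gh_e.
have h2 := lt_mul hg' (gh_e _) (gh_e _) hlt.
have h3 : lt (e * a ^+ 2) (e * a' ^+ 2).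
  rewrite !nu2; apply: le_lt_trans h2; rewrite [X in le _ X]mulrC; exact: le_mul.
have E1 : a ^+ 2 + a' ^+ 2 = a' ^+ 2 by rewrite addrC; apply: dom.
rewrite /absorb E1; apply: dom.
by rewrite nuee nu2 [X in lt X _]mulrC.
Qed.
Lemma AM a a' : absorb (e * a * a') (a ^+ 2 + a' ^+ 2).
Proof.
case: (le_total (gh_e a) (gh_e a')) => h; first exact: AM1.
by rewrite addrC mulrAC; apply: AM1.
Qed.

Lemma GEN1a u v w : le (e * u) (e * v) ->
  le (e * w * (e * w)) (e * u * (e * v)) -> absorb w (u + v).
Proof.
move=> huv hw; set U := e * u in huv hw *; set V := e * v in huv hw *;
set W := e * w in hw *.
have gU : gh U by apply: gh_e. have gV : gh V by apply: gh_e.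
have gW : gh W by apply: gh_e.
case: (eqVneq U V) => E.
  have -> : u + v = e * v by apply: domeq.
  apply: absorb_gh; first exact: gh_e.
  rewrite eeK -/V -/W.
  case: (le_total gW gV) => // h; case: (eqVneq V W) => E2.
    by rewrite E2; apply: le_refl.
  have hlt : lt V W by split => //; apply/eqP.
  have gnW : ghostnz W by apply: lt_gnz hlt.
  have h1 := lt_mul gnW gV gW hlt.
  have h2 : le (V * V) (W * V) by rewrite [X in le _ X]mulrC; apply: le_mul.
  exfalso; apply: (lt_nle (le_lt_trans h2 h1)); by move: hw; rewrite E.
have hlt : lt U V by split => //; apply/eqP.
have gnV : ghostnz V by apply: lt_gnz hlt.
have contra : le V W -> False.
  move=> h; have h1 := lt_mul gnV gU gV hlt.
  have h2 : le (V * V) (W * W).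
    apply: (@le_trans _ (V * W)); first exact: le_mul.
    by rewrite [X in le X _]mulrC; apply: le_mul.
  apply: (lt_nle (lt_le_trans h1 h2)); by rewrite [V * U]mulrC.
have E1 : u + v = v by rewrite addrC; apply: dom.
rewrite /absorb E1; apply: dom.
case: (le_total gW gV) => h; last by exfalso; apply: contra.
split => // E2; apply: contra; rewrite /V /W E2; exact: le_refl.
Qed.
Lemma GEN1 u v w : le (e * w * (e * w)) (e * u * (e * v)) -> absorb w (u + v).
Proof.
case: (le_total (gh_e u) (gh_e v)) => h; first exact: GEN1a.
move=> hh; rewrite addrC; apply: GEN1a => //; by rewrite [X in le _ X]mulrC.
Qed.

Lemma discD c0 h g : discrete_gen c0 -> ghostnz h -> gh g -> lt h g -> le (c0 * h) g.
Proof.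
move=> [hc0 [_ hmin]] hh hg hlt.
have [hi [ghi E]] := gnz_inv hh.
have gng : ghostnz g by apply: lt_gnz hlt.
have h1 := lt_mul ghi (gnz_gh hh) hg hlt.
rewrite mulrC E in h1.
have := hmin _ (gnz_mul gng ghi); rewrite mulrC => /(_ h1) /(le_mul h).
by rewrite mulrA E mulrC hg mulrC.
Qed.

Lemma GEN2a c0 u v w : discrete_gen c0 -> gh u -> gh v -> le u v ->
  e * w * (e * w) = c0 * (u * v) -> absorb w (u + v).
Proof.
move=> hc0 gu gv huv hw; rewrite /absorb huv.
apply: absorb_gh => //; rewrite gv.
set W := e * w in hw *; have gW : gh W by apply: gh_e.
have [gnc0 [ltc0 _]] := hc0.
case: (le_total gW gv) => // h; case: (eqVneq v W) => E2.
  by rewrite E2; apply: le_refl.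
have hlt : lt v W by split => //; apply/eqP.
have gnW : ghostnz W by apply: lt_gnz hlt.
have v0 : v <> 0.
  move=> v0; rewrite v0 in huv; move: huv; rewrite /eR_le addr0 => u0.
  by apply: (gnz_mul_ne0 gnW gnW); rewrite hw u0 v0 !mulr0.
have gnv : ghostnz v by apply/gnzP.
have hD := discD hc0 gnv gW hlt.
have gcv := gnz_mul gnc0 gnv.
have h1 : le (W * (c0 * v)) (W * W) by apply: le_mul.
have h2 := lt_mul gcv gv gW hlt.
have h3 : le (c0 * v * u) (c0 * v * v) by apply: le_mul.
have E3 : W * W = c0 * v * u by rewrite hw; ring.
exfalso; apply: (@lt_irr (c0 * v * u)).
rewrite -[X in lt _ X]E3.
apply: le_lt_trans h3 _; apply: lt_le_trans h2 _.
by rewrite mulrC.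
Qed.
Lemma GEN2 c0 u v w : discrete_gen c0 -> gh u -> gh v ->
  e * w * (e * w) = c0 * (u * v) -> absorb w (u + v).
Proof.
move=> hc0 gu gv; case: (le_total gu gv) => h; first exact: GEN2a.
move=> hh; rewrite addrC; apply: (GEN2a hc0) => //; by rewrite [u * v]mulrC in hh.
Qed.
Lemma gh_ee : gh e.
Proof. exact: ee. Qed.
Lemma ghr u : gh u -> u * e = u.
Proof. by rewrite mulrC. Qed.

Lemma NT : sr_nontrivial R -> exists c, ghostnz c /\ lt e c.
Proof.
move=> [g [gg gne]].
case: (le_total gh_ee (gnz_gh gg)) => h.
  by exists g; split => //; split => // E; apply: gne.
have [hi [ghi E]] := gnz_inv gg.
have hlt : lt g e by split => // E2; apply: gne.
have := lt_mul ghi (gnz_gh gg) gh_ee hlt.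
rewrite mulrC E ghr; last exact: gnz_gh.
by move=> h2; exists hi.
Qed.

Lemma DC Q B : sr_dense R -> sr_nontrivial R -> gh Q -> gh B -> lt Q B ->
  exists c, ghostnz c /\ lt e c /\ lt (c * Q) B.
Proof.
move=> hd hnt gQ gB hlt.
case: (eqVneq Q 0) => [Q0|Qn0].
  have [c [gc lc]] := NT hnt; exists c; split => //; split => //.
  by rewrite Q0 mulr0 -Q0.
have gnQ : ghostnz Q by apply/gnzP; split => //; apply/eqP.
have gnB : ghostnz B by apply: lt_gnz hlt.
have [Qi [gQi EQ]] := gnz_inv gnQ.
set L := B * Qi.
have gnL : ghostnz L by apply: gnz_mul.
have lL : lt e L.
  have := lt_mul gQi gQ gB hlt; by rewrite mulrC EQ [Qi * B]mulrC.
apply: NNPP => H; apply: hd; exists L; split => //; split => //.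
move=> g gg lg.
case: (le_total (gnz_gh gnL) (gnz_gh gg)) => // h.
case: (eqVneq g L) => [->|ne]; first by apply: le_refl; apply: gnz_gh.
exfalso; apply: H; exists g; split => //; split => //.
have hgL : lt g L by split => //; apply/eqP.
have := lt_mul gnQ (gnz_gh gg) (gnz_gh gnL) hgL.
rewrite /L mulrCA EQ ghr // mulrC => h2.
by [].
Qed.

Lemma EX c qx qy b : ghostnz c -> lt e c ->
  lt (c * (e * (qx * qy))) (e * b ^+ 2) ->
  exists al, tangible al /\ lt (e * (al ^+ 2 * qx)) (e * (al * b)) /\
                           lt (e * qy) (e * (al * b)).
Proof.
move=> gc lc hlt.
have b0 : b <> 0.
  by move=> b0; apply: (lt_ne0 hlt); rewrite b0 expr2 mulr0 mulr0.
have gB := nz_nu b0; set B := e * b in gB.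
have [Bi [gBi EB]] := gnz_inv gB.
have gY : gh (e * qy) := gh_e qy.
case: (eqVneq qx 0) => [X0|Xn0].
  set m := e * qy + B.
  have gm : gh m by apply: gh_add => //; apply: gnz_gh.
  have gnm : ghostnz m.
    apply/gnzP; split => // m0.
    have := le_addr (e * qy) (gnz_gh gB); rewrite -/m m0 /eR_le addr0.
    exact: gnz_ne0.
  have [al [tal Eal]] := gnz_lift (gnz_mul (gnz_mul gBi gnm) gc).
  have Eab : e * (al * b) = m * c.
    rewrite -nuM -Eal -/B.
    have -> : Bi * m * c * B = (B * Bi) * m * c by ring.
    by rewrite EB gm.
  exists al; split => //; rewrite Eab; split.
    rewrite X0 !mulr0; split; first exact: le0.
    by move=> E; apply: (gnz_ne0 (gnz_mul gnm gc)).
  apply: le_lt_trans (le_addl B gY) _; rewrite -/m.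
  have := lt_mul gnm gh_ee (gnz_gh gc) lc; by rewrite ghr.
have gX := nz_nu (elimN eqP Xn0); set X := e * qx in gX.
have [Xi [gXi EX]] := gnz_inv gX.
have [ci [gci Ec]] := gnz_inv gc.
have [al [tal Eal]] := gnz_lift (gnz_mul (gnz_mul gB gXi) gci).
set A := e * al in Eal.
have gA : ghostnz A by rewrite -Eal; apply: gnz_mul => //; apply: gnz_mul.
have gAB := gnz_mul gA gB.
have E1 : e * (al ^+ 2 * qx) = (A * B) * ci.
  rewrite -nuM nu2 -/A -/X.
  have -> : A * A * X = A * (B * Xi * ci) * X by rewrite -Eal.
  have -> : A * (B * Xi * ci) * X = (A * B * ci) * (X * Xi) by ring.
  by rewrite EX ghr //; apply: gnz_gh; apply: gnz_mul.
have E2 : e * (al * b) = A * B by rewrite -nuM.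
exists al; split => //; rewrite E1 E2; split.
  have h1 := lt_mul gci gh_ee (gnz_gh gc) lc.
  rewrite (ghr (gnz_gh gci)) (mulrC ci c) Ec in h1.
  have := lt_mul gAB (gnz_gh gci) gh_ee h1.
  by rewrite ghr //; apply: gnz_gh.
rewrite -nuM nu2 -/X -/B in hlt.
have := lt_mul (gnz_mul gXi gci) _ _ hlt.
have -> : Xi * ci * (c * (X * (e * qy))) = (c * ci) * (X * Xi) * (e * qy) by ring.
rewrite Ec EX ee gY.
have -> : Xi * ci * (B * B) = A * B.
  by rewrite -Eal; ring.
apply.
  by apply: gh_mulr; apply: gnz_gh.
by apply: gh_mulr; apply: gnz_gh.
Qed.
End ST.

Section Quad.
Variables (R : comPzSemiRingType) (V : lSemiModType R).
Local Notation e := (sr_e R).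
Local Notation le := (@eR_le R).
Local Notation lt := (@eR_lt R).
Hypothesis TS : tangible_supersemifield R.
Let ST : supertropical R := TS.1.
Implicit Types (a c : R) (u v w : V) (q : V -> R) (b : V -> V -> R).

Lemma bDr b u v w : sym_bilinear b -> b u (v + w) = b u v + b u w.
Proof. by move=> [bs [bD _]]; rewrite bs bD (bs v) (bs w). Qed.
Lemma bZr b a u v : sym_bilinear b -> b u (a *: v) = a * b u v.
Proof. by move=> [bs [_ bZ]]; rewrite bs bZ bs. Qed.
Lemma bDl b u v w : sym_bilinear b -> b (u + v) w = b u w + b v w.
Proof. by move=> [_ [bD _]]. Qed.
Lemma bZl b a u v : sym_bilinear b -> b (a *: u) v = a * b u v.
Proof. by move=> [_ [_ bZ]]. Qed.

Lemma qform q b x y a c : (forall a u, q (a *: u) = a ^+ 2 * q u) -> companion q b ->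
  q (a *: x + c *: y) = a ^+ 2 * q x + c ^+ 2 * q y + a * c * b x y.
Proof.
move=> hom [hb hc]; rewrite hc !hom bZl // bZr //; congr (_ + _); ring.
Qed.

Lemma bxx_abs q b x : quadratic_pair q b -> absorb (b x x) (e * q x).
Proof.
move=> [hom [hb hc]].
have := hom (1 + 1) x; rewrite scalerDl scale1r hc eadd -/(sr_e R).
by rewrite expr2 ee.
Qed.

Lemma absorb_sub (w z T r : R) : absorb w z -> T = z + r -> absorb w T.
Proof. by move=> h ->; apply: absorb_ext. Qed.

Lemma QL q b x y : quadratic_pair q b ->
  (forall a c, absorb (a * c * b x y) (a ^+ 2 * q x + c ^+ 2 * q y)) ->
  quasilinear_on q (span2 x y).
Proof.
move=> hqp H u v [a [c ->]] [a' [c' ->]].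
have hqp' := hqp; case: hqp' => [hom [hb hc]].
rewrite hc !(qform x y _ _ hom (conj hb hc)).
rewrite !(bDl, bDr, bZl, bZr) //.
have bs : b y x = b x y by case: hb.
rewrite bs.
have Ax := bxx_abs x hqp; have Ay := bxx_abs y hqp.
set Qx := q x in Ax *; set Qy := q y in Ay *; set B := b x y.
set bx := b x x in Ax *; set by' := b y y in Ay *.
have Hx : forall a a', absorb (a * (a' * bx)) ((a ^+ 2 + a' ^+ 2) * Qx).
  move=> a1 a2; apply: (@absorb_trans _ _ (Qx * (e * a1 * a2))).
    have := absorb_mul (a1 * a2) Ax.
    by rewrite (_ : a1 * a2 * (e * Qx) = Qx * (e * a1 * a2)) ?mulrA //; ring.
  by rewrite [X in absorb _ X]mulrC; apply: absorb_mul; apply: (AM ST).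
have Hy : forall a a', absorb (a * (a' * by')) ((a ^+ 2 + a' ^+ 2) * Qy).
  move=> a1 a2; apply: (@absorb_trans _ _ (Qy * (e * a1 * a2))).
    have := absorb_mul (a1 * a2) Ay.
    by rewrite (_ : a1 * a2 * (e * Qy) = Qy * (e * a1 * a2)) ?mulrA //; ring.
  by rewrite [X in absorb _ X]mulrC; apply: absorb_mul; apply: (AM ST).
rewrite -/(absorb _ _).
apply: absorb_add; [apply: absorb_add|apply: absorb_add].
- apply: (@absorb_sub _ _ _ (c ^+ 2 * Qy + a * c * B + (c' ^+ 2 * Qy + a' * c' * B)) (Hx a a')); rewrite /Qx /Qy /B; ring.
- have h := H a c'; rewrite -mulrA in h.
  apply: (@absorb_sub _ _ _ (c ^+ 2 * Qy + a * c * B + (a' ^+ 2 * Qx + a' * c' * B)) h); rewrite /Qx /Qy /B; ring.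
- have h := H a' c; rewrite -mulrA in h; rewrite mulrCA.
  apply: (@absorb_sub _ _ _ (a ^+ 2 * Qx + a * c * B + (c' ^+ 2 * Qy + a' * c' * B)) h); rewrite /Qx /Qy /B; ring.
- apply: (@absorb_sub _ _ _ (a ^+ 2 * Qx + a * c * B + (a' ^+ 2 * Qx + a' * c' * B)) (Hy c c')); rewrite /Qx /Qy /B; ring.
Qed.
Lemma qform1 q b x y al : (forall a u, q (a *: u) = a ^+ 2 * q u) -> companion q b ->
  q (al *: x + 1 *: y) = al ^+ 2 * q x + q y + al * b x y.
Proof. by move=> hom hc; rewrite (qform x y _ _ hom hc) expr1n mul1r mulr1. Qed.

Lemma uniq_dom (S w w' : R) : lt (e * S) (e * w) -> S + w' = S + w -> w' = w.
Proof.
move=> hlt E; rewrite (addrC S w) (dom ST hlt) in E.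
case: (classic (le (e * w') (e * S))) => h.
  exfalso; apply: (lt_irr (u := e * S)); rewrite [X in lt _ X](_ : _ = e * (S + w')).
    by rewrite E.
  by rewrite mulrDr addrC h.
case: (le_total ST (gh_e ST S) (gh_e ST w')) => h2; last by [].
have hl : lt (e * S) (e * w').
  split => // E2; apply: h; rewrite -E2; exact: (le_refl (gh_e ST S)).
by rewrite addrC (dom ST hl) in E.
Qed.

Definition goodal q b x y al := tangible al /\
  lt (e * (al ^+ 2 * q x)) (e * (al * b x y)) /\ lt (e * q y) (e * (al * b x y)).

Lemma RIG q b x y al : quadratic_pair q b -> goodal q b x y al ->
  forall b', companion q b' -> b' x y = b x y.
Proof.
move=> [hom hc] [tal [h1 h2]] b' hc'.
have hS : lt (e * (al ^+ 2 * q x + q y)) (e * (al * b x y)).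
  rewrite mulrDr; apply: (lt_add ST) => //; exact: gh_e.
have E : al ^+ 2 * q x + q y + al * b' x y = al ^+ 2 * q x + q y + al * b x y.
  by rewrite -!(qform1 x y _ hom).
have := uniq_dom hS E.
have [t ht] := tang_inv TS tal => E2.
by rewrite -[b' x y]mul1r -ht mulrAC E2 mulrAC ht mul1r.
Qed.

Lemma QLC q b x y al : quadratic_pair q b -> goodal q b x y al ->
  quasilinear_on q (span2 x y) -> False.
Proof.
move=> [hom hc] [tal [h1 h2]] hq.
have hS : lt (e * (al ^+ 2 * q x + q y)) (e * (al * b x y)).
  rewrite mulrDr; apply: (lt_add ST) => //; exact: gh_e.
have E := hq (al *: x) (1 *: y).
rewrite (qform1 x y _ hom hc) !hom expr1n mul1r in E.
have E3 : al ^+ 2 * q x + q y + al * b x y = al ^+ 2 * q x + q y.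
  apply: E; first by exists al, 0; rewrite scale0r addr0.
  by exists 0, 1; rewrite scale0r add0r.
move: E3; rewrite (addrC (_ + _) (al * _)) (dom ST hS) => E3.
by case: hS => _; rewrite E3.
Qed.
Lemma NR q b x y c0 : quadratic_pair q b -> discrete_gen c0 -> tangible (q x) ->
  e * b x y ^+ 2 = c0 * (e * (q x * q y)) ->
  forall b', companion q b' -> e * b' x y = e * b x y.
Proof.
move=> hqp hc0 tqx Eb b' hc'.
have [gnc0 [ltc0 _]] := hc0.
have [hom hc] := hqp.
have gB := gh_e ST (b x y); have gB' := gh_e ST (b' x y).
set B := e * b x y in gB *; set B' := e * b' x y in gB' *.
case: (eqVneq B' B) => // ne.
case: (le_total ST gB gB') => h.
  have hlt : lt B B' by split => // E; apply: (elimN eqP ne); rewrite E.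
  have gnB' : ghostnz B' by apply: (lt_gnz ST gB' hlt).
  have hl2 : lt (c0 * (e * (q x * q y))) (e * b' x y ^+ 2).
    rewrite -Eb !(nu2 ST) -/B -/B'.
    apply: le_lt_trans (le_mul B h) _.
    have := lt_mul TS gnB' gB gB' hlt; by rewrite mulrC.
  have [al hal] := EX ST TS gnc0 ltc0 hl2.
  have E := RIG (conj hom hc') hal hqp.2; by rewrite /B /B' E.
have hlt : lt B' B by split => // E; apply: (elimN eqP ne).
have gnB : ghostnz B by apply: (lt_gnz ST gB hlt).
have gX := tang_nu TS tqx; set X := e * q x in gX.
have gY := gh_e ST (q y); set Y := e * q y in gY.
have EBB : B * B = c0 * (X * Y) by rewrite -(nu2 ST) Eb -(nuM ST).
have gnY : ghostnz Y.
  apply/(gnzP ST); split => // Y0.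
  by apply: (gnz_mul_ne0 ST TS gnB gnB); rewrite EBB Y0 !mulr0.
have [Xi [gXi EXi]] := gnz_inv TS gX.
have [al [tal Eal]] := gnz_lift TS (gnz_mul TS gnB gXi).
set A := e * al in Eal.
have gnA : ghostnz A by rewrite -Eal; apply: (gnz_mul TS).
have AX : A * X = B.
  by rewrite -Eal -mulrA (mulrC Xi) EXi (ghr (gnz_gh ST gnB)).
have E1 : e * (al ^+ 2 * q x) = A * B by rewrite -(nuM ST) (nu2 ST) -/A -/X -mulrA AX.
have E2 : e * (al * b x y) = A * B by rewrite -(nuM ST).
have E3 : e * (al * b' x y) = A * B' by rewrite -(nuM ST).
have ABc : A * B = c0 * Y.
  rewrite -Eal (_ : B * Xi * B = (B * B) * Xi); last by ring.
  rewrite EBB.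
  rewrite (_ : c0 * (X * Y) * Xi = c0 * Y * (X * Xi)); last by ring.
  by rewrite EXi (ghr (gh_mull c0 gY)).
have lY : lt Y (A * B).
  rewrite ABc; have := lt_mul TS gnY (gh_ee ST) (gnz_gh ST gnc0) ltc0.
  by rewrite (ghr gY) mulrC.
have lB : lt (A * B') (A * B) by apply: (lt_mul TS gnA) => //; apply: gnz_gh.
have Ed : al ^+ 2 * q x + q y = al ^+ 2 * q x by apply: (dom ST); rewrite E1.
have Eq : al ^+ 2 * q x + q y + al * b x y = al ^+ 2 * q x + q y + al * b' x y.
  by rewrite -!(qform1 x y _ hom).
rewrite Ed (domeq ST) in Eq; last by rewrite E1 E2.
rewrite (dom ST) in Eq; last by rewrite E3 E1.
have T : tangible (al ^+ 2 * q x).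
  apply: (tang_mul TS) => //; rewrite expr2; exact: (tang_mul TS tal tal).
by exfalso; apply: T; exists (al * b x y); rewrite Eq.
Qed.
Lemma DL c0 (Q B2 : R) : discrete_gen c0 -> gh Q -> gh B2 -> lt B2 (c0 * Q) -> le B2 Q.
Proof.
move=> hc0 gQ gB hlt.
case: (le_total ST gB gQ) => // h.
case: (eqVneq Q B2) => [<-|ne]; first exact: le_refl.
have hl : lt Q B2 by split => //; apply/eqP.
have Q0 : Q <> 0 by move=> Q0; apply: (lt_ne0 hlt); rewrite Q0 mulr0.
have gnQ : ghostnz Q by apply/(gnzP ST).
by exfalso; apply: (lt_nle hlt); apply: (discD ST TS hc0 gnQ gB hl).
Qed.

Lemma QL1 q b x y : quadratic_pair q b -> nu_le (b x y ^+ 2) (q x * q y) ->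
  quasilinear_on q (span2 x y).
Proof.
move=> hqp hle; apply: (QL hqp) => a c; apply: (GEN1 ST TS).
rewrite !(nuM ST).
rewrite (_ : a * c * b x y * (a * c * b x y) = (a * c) ^+ 2 * b x y ^+ 2); last by ring.
rewrite (_ : a ^+ 2 * q x * (c ^+ 2 * q y) = (a * c) ^+ 2 * (q x * q y)); last by ring.
by rewrite (mulrCA e _ (b x y ^+ 2)) (mulrCA e _ (q x * q y)); apply: le_mul; exact: hle.
Qed.
End Quad.

Unset Implicit Arguments.
Set Strict Implicit.

Theorem theorem1p5 (R : comPzSemiRingType) (V : lSemiModType R)
    (q : V -> R) (b : V -> V -> R) (x y : V) :
  tangible_supersemifield R -> sr_nontrivial R -> quadratic_pair q b ->
  (* (a) dense case *)
  (sr_dense R ->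
     (quasilinear_on q (span2 x y) <-> nu_le (b x y ^+ 2) (q x * q y)) /\
     (~ nu_le (b x y ^+ 2) (q x * q y) -> rigid_at q x y)) /\
  (* (b) discrete case; pinv = pi^{-1} *)
  (forall (c0 pi pinv : R),
     discrete_gen c0 -> tangible pi -> pi * pinv = 1 -> sr_e R * pinv = c0 ->
     ((nu_lt (b x y ^+ 2) (pinv * (q x * q y)) \/
       (in_eR (q x) /\ in_eR (q y) /\
        nu_eq (b x y ^+ 2) (pinv * (q x * q y)))) ->
        quasilinear_on q (span2 x y)) /\
     (~ (nu_lt (b x y ^+ 2) (pinv * (q x * q y)) \/
         (in_eR (q x) /\ in_eR (q y) /\
          nu_eq (b x y ^+ 2) (pinv * (q x * q y)))) ->
        nu_rigid_at q x y) /\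
     (nu_lt (pinv * (q x * q y)) (b x y ^+ 2) -> rigid_at q x y)).
Proof.
move=> TS hnt hqp.
have ST : supertropical R := TS.1.
have [hom hcomp] := hqp.
split.
  move=> hd.
  have key : ~ nu_le (b x y ^+ 2) (q x * q y) -> exists al, goodal q b x y al.
    move=> hn.
    have hlt : eR_lt (sr_e R * (q x * q y)) (sr_e R * b x y ^+ 2).
      case: (le_total ST (gh_e ST (b x y ^+ 2)) (gh_e ST (q x * q y))) => h.
        by exfalso; apply: hn.
      split => // E; apply: hn; rewrite /nu_le -E; exact: (le_refl (gh_e ST _)).
    have [c [gc [lc hc]]] := DC ST TS hd hnt (gh_e ST _) (gh_e ST _) hlt.
    have [al hal] := EX ST TS gc lc hc. by exists al.
  split; first split.
  - move=> hql; apply: NNPP => hn; have [al hal] := key hn.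
    exact: (QLC TS hqp hal hql).
  - exact: (QL1 TS hqp).
  - move=> hn b1 b2 h1 h2; have [al hal] := key hn.
    by rewrite (RIG TS hqp hal h1) (RIG TS hqp hal h2).
move=> c0 pi pinv hc0 tpi hpp hpinv.
have [gnc0 [ltc0 _]] := hc0.
have epinv : forall z, sr_e R * (pinv * z) = c0 * (sr_e R * z).
  by move=> z; rewrite mulrA hpinv mulrA (ghr (gnz_gh ST gnc0)).
split; [|split].
- case.
    rewrite /nu_lt epinv => hlt; apply: (QL1 TS hqp).
    apply: (DL TS hc0) => //; [exact: gh_e | exact: gh_e].
  move=> [hx [hy heq]]; apply: (QL TS hqp) => a c.
  move/(in_eR_gh ST): hx => hx; move/(in_eR_gh ST): hy => hy.
  apply: (GEN2 ST TS hc0); [exact: gh_mull | exact: gh_mull |].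
  rewrite (nuM ST).
  rewrite (_ : a * c * b x y * (a * c * b x y) = (a * c) ^+ 2 * b x y ^+ 2); last by ring.
  rewrite mulrCA heq epinv (gh_mulr (q y) hx).
  ring.
- move=> hn.
  have gb := gh_e ST (b x y ^+ 2).
  have gQ : gh (c0 * (sr_e R * (q x * q y))) by apply: gh_mulr; apply: (gnz_gh ST).
  case: (eqVneq (sr_e R * b x y ^+ 2) (c0 * (sr_e R * (q x * q y)))) => Eq.
    have nt : ~ (in_eR (q x) /\ in_eR (q y)).
      by move=> [h1 h2]; apply: hn; right; split => //; split => //; rewrite /nu_eq epinv.
    have bs : b y x = b x y by case: hcomp => [[bs _] _].
    case: (classic (in_eR (q x))) => hx.
      have ty : tangible (q y) by move=> hy; apply: nt.
      have Eq' : sr_e R * b y x ^+ 2 = c0 * (sr_e R * (q y * q x)) by rewrite bs (mulrC (q y)) Eq.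
      move=> b1 b2 h1 h2.
      have E1 := NR TS hqp hc0 ty Eq' h1; have E2 := NR TS hqp hc0 ty Eq' h2.
      have s1 : b1 y x = b1 x y by case: h1 => [[s _] _].
      have s2 : b2 y x = b2 x y by case: h2 => [[s _] _].
      by rewrite s1 s2 in E1 E2; rewrite E1 E2.
    move=> b1 b2 h1 h2.
    by rewrite (NR TS hqp hc0 hx Eq h1) (NR TS hqp hc0 hx Eq h2).
  case: (le_total ST gb gQ) => h.
    by exfalso; apply: hn; left; rewrite /nu_lt epinv; split => //; apply/eqP.
  have hlt : eR_lt (c0 * (sr_e R * (q x * q y))) (sr_e R * b x y ^+ 2).
    by split => // E; apply: (elimN eqP Eq).
  have [al hal] := EX ST TS gnc0 ltc0 hlt.
  move=> b1 b2 h1 h2.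
  by rewrite (RIG TS hqp hal h1) (RIG TS hqp hal h2).
- rewrite /nu_lt epinv => hlt.
  have [al hal] := EX ST TS gnc0 ltc0 hlt.
  move=> b1 b2 h1 h2.
  by rewrite (RIG TS hqp hal h1) (RIG TS hqp hal h2).
Qed.
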